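(* Let $n\ge1$, and let $H_{2n}$ be the $(4n+1)$-dimensional Heisenberg group. Let $N=H_{2n}\times\mathbb R^3$, let $\Gamma$ be a cocompact lattice in $H_{2n}$, and let $\mathbb Z^3\subset\mathbb R^3$ be a lattice. Then the compact nilmanifold $N/(\Gamma\times\mathbb Z^3)$ admits an invariant HPKT structure.
   Context: The Heisenberg Lie algebra $\mathfrak h_{2n}$ has basis $X_1,\dots,X_{2n},Y_1,\dots,Y_{2n},Z$ with nonzero brackets $[X_j,Y_j]=Z$. $H_{2n}$ is the corresponding simply connected Lie group. An almost hyper-paracomplex structure on a manifold is a triple $(J_1,J_2,J_3)$ of endomorphisms of the tangent bundle with $J_1^2=J_2^2=\mathrm{id}$, $J_3^2=-\mathrm{id}$ and $J_1J_2=-J_2J_1=J_3$. It is hyper-paracomplex if each $J_a$ has vanishing Nijenhuis tensor. A metric $g$ is hyperparahermitian if $g(J_1X,J_1Y)=g(J_2X,J_2Y)=-g(J_3X,J_3Y)=-g(X,Y)$. An HPKT structure is a hyper-paracomplex structure together with a hyperparahermitian metric admitting a linear connection $\nabla$ with $\nabla g=\nabla J_a=0$ and totally skew-symmetric torsion. ''Invariant'' on a quotient of a Lie group by a discrete subgroup (acting by left translations) means induced by left-invariant structures. *)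

(* Defs.v *)
(* Left-invariant geometric structures on the Lie group
   N = H_{2n} x R^3 are encoded on its Lie algebra n = h_{2n} (+) R^3,
   realised as row vectors 'rV[R]_(dim n) in the basis
   X_1..X_2n, Y_1..Y_2n, Z, E_1, E_2, E_3. *)
From HB Require Import structures.
From mathcomp Require Import all_boot all_order all_algebra.
From mathcomp Require Import reals.
Set Implicit Arguments. Unset Strict Implicit. Unset Printing Implicit Defensive.
Import Order.TTheory GRing.Theory Num.Theory.
Local Open Scope ring_scope.

Section HPKT.
Variable R : realType.

(* dimension of h_{2n} (+) R^3 : (4n+1) + 3 *)
Definition ldim (n : nat) : nat := (4 * n + 3).+1.

Definition vec (n : nat) := 'rV[R]_(ldim n).

Definition Xi (n j : nat) : 'I_(ldim n) := inord j.             (* X_{j+1}, j < 2n *)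
Definition Yi (n j : nat) : 'I_(ldim n) := inord (2 * n + j).   (* Y_{j+1}, j < 2n *)
Definition Zi (n : nat) : 'I_(ldim n) := inord (4 * n).
Definition Ei (n k : nat) : 'I_(ldim n) := inord (4 * n + 1 + k). (* R^3 basis, k < 3 *)

(* Lie bracket of h_{2n} (+) R^3 : only nonzero brackets [X_j, Y_j] = Z *)
Definition bracket (n : nat) (u v : vec n) : vec n :=
  (\sum_(j < 2 * n)
      (u 0 (Xi n j) * v 0 (Yi n j) - u 0 (Yi n j) * v 0 (Xi n j)))
    *: delta_mx 0 (Zi n).

Definition act (n : nat) (J : 'M[R]_(ldim n)) (u : vec n) : vec n := u *m J.

Definition nijenhuis (n : nat) (J : 'M[R]_(ldim n)) (x y : vec n) : vec n :=
  bracket (act J x) (act J y) - act J (bracket (act J x) y)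
  - act J (bracket x (act J y)) + act J (act J (bracket x y)).

Definition hyper_paracomplex (n : nat) (J1 J2 J3 : 'M[R]_(ldim n)) : Prop :=
  [/\ [/\ forall u, act J1 (act J1 u) = u,
          forall u, act J2 (act J2 u) = u &
          forall u, act J3 (act J3 u) = - u],
      [/\ forall u, act J1 (act J2 u) = act J3 u &
          forall u, act J2 (act J1 u) = - act J3 u] &
      [/\ forall x y, nijenhuis J1 x y = 0,
          forall x y, nijenhuis J2 x y = 0 &
          forall x y, nijenhuis J3 x y = 0]].

Definition form (n : nat) (G : 'M[R]_(ldim n)) (u v : vec n) : R :=
  (u *m G *m v^T) 0 0.

(* G is a (pseudo-Riemannian) metric: symmetric and nondegenerate *)
Definition metric (n : nat) (G : 'M[R]_(ldim n)) : Prop :=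
  G^T = G /\ G \in unitmx.

Definition hyperparahermitian (n : nat) (J1 J2 J3 G : 'M[R]_(ldim n)) : Prop :=
  [/\ metric G,
      forall x y, form G (act J1 x) (act J1 y) = - form G x y,
      forall x y, form G (act J2 x) (act J2 y) = - form G x y &
      forall x y, - form G (act J3 x) (act J3 y) = - form G x y].

(* a left-invariant linear connection is a bilinear map on the Lie algebra;
   it is given by connection matrices Gam i (one per basis vector):
   nabla_u v = sum_i u_i (v *m Gam i) *)
Definition nabla (n : nat) (Gam : 'I_(ldim n) -> 'M[R]_(ldim n)) (u v : vec n)
  : vec n := \sum_i u 0 i *: (v *m Gam i).

Definition torsion (n : nat) (Gam : 'I_(ldim n) -> 'M[R]_(ldim n)) (x y : vec n)
  : vec n := nabla Gam x y - nabla Gam y x - bracket x y.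

(* HPKT structure on the Lie algebra (i.e. a left-invariant HPKT structure) *)
Definition HPKT (n : nat) (J1 J2 J3 G : 'M[R]_(ldim n)) : Prop :=
  [/\ hyper_paracomplex J1 J2 J3,
      hyperparahermitian J1 J2 J3 G &
      exists Gam : 'I_(ldim n) -> 'M[R]_(ldim n),
        [/\ (* nabla g = 0 *)
            forall x y z, form G (nabla Gam x y) z + form G y (nabla Gam x z) = 0,
            (* nabla J_a = 0 *)
            forall x y, nabla Gam x (act J1 y) = act J1 (nabla Gam x y),
            forall x y, nabla Gam x (act J2 y) = act J2 (nabla Gam x y),
            forall x y, nabla Gam x (act J3 y) = act J3 (nabla Gam x y) &
            (* totally skew-symmetric torsion *)
            forall x y z,
              form G (torsion Gam x y) z = - form G (torsion Gam y x) z /\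
              form G (torsion Gam x y) z = - form G (torsion Gam x z) y]].

End HPKT.

(* Main.v *)
Require Import Defs.
From HB Require Import structures.
From mathcomp Require Import all_boot all_order all_algebra.
From mathcomp Require Import reals.
From mathcomp Require Import zify ring.
Set Implicit Arguments. Unset Strict Implicit. Unset Printing Implicit Defensive.
Import Order.TTheory GRing.Theory Num.Theory.

Definition swn n k := if k < 2*n then k + 2*n else if k < 4*n then k - 2*n else if k == 4*n then 4*n+1 else if k == 4*n+1 then 4*n else if k == 4*n+2 then 4*n+3 else 4*n+2.
Definition ppn n k := if k < n then k+n else if k < 2*n then k-n else if k < 3*n then k+n else if k < 4*n then k-n else if k == 4*n then 4*n+2 else if k == 4*n+1 then 4*n+3 else if k == 4*n+2 then 4*n else 4*n+1.
Definition fstn n k := (k < 2*n) || (k == 4*n) || (k == 4*n+2).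
Definition pfn n k := (k < n) || ((2*n <= k) && (k < 3*n)) || (k == 4*n) || (k == 4*n+1).
Ltac noif c := lazymatch c with context [if _ then _ else _] => fail | _ => idtac end.
Ltac split_ifs := repeat match goal with
 | |- context [if ?c then _ else _] => noif c; destruct c eqn:?
 | H : context [if ?c then _ else _] |- _ => noif c; destruct c eqn:?
end.
Ltac nsolve := unfold ldim, swn, ppn, fstn, pfn in *; split_ifs; lia.

Lemma swn_lt n k : k < ldim n -> swn n k < ldim n. Proof. move=> hk; nsolve. Qed.
Lemma ppn_lt n k : k < ldim n -> ppn n k < ldim n. Proof. move=> hk; nsolve. Qed.
Lemma swnK n k : k < ldim n -> swn n (swn n k) = k. Proof. move=> hk; nsolve. Qed.
Lemma ppnK n k : k < ldim n -> ppn n (ppn n k) = k. Proof. move=> hk; nsolve. Qed.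
Lemma swn_pp n k : k < ldim n -> swn n (ppn n k) = ppn n (swn n k). Proof. move=> hk; nsolve. Qed.
Lemma fstn_sw n k : k < ldim n -> fstn n (swn n k) = ~~ fstn n k. Proof. move=> hk; nsolve. Qed.
Lemma fstn_pp n k : k < ldim n -> fstn n (ppn n k) = fstn n k. Proof. move=> hk; nsolve. Qed.
Lemma pfn_sw n k : k < ldim n -> pfn n (swn n k) = pfn n k. Proof. move=> hk; nsolve. Qed.
Lemma pfn_pp n k : k < ldim n -> pfn n (ppn n k) = ~~ pfn n k. Proof. move=> hk; nsolve. Qed.
Lemma inVn_pp n k : k < ldim n -> (ppn n k < 4 * n) = (k < 4 * n). Proof. move=> hk; nsolve. Qed.
Lemma inVn_sw n k : k < ldim n -> (swn n k < 4 * n) = (k < 4 * n). Proof. move=> hk; nsolve. Qed.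
Lemma swn_X n j : j < 2 * n -> swn n j = 2 * n + j. Proof. move=> hk; nsolve. Qed.
Lemma swn_Y n j : j < 2 * n -> swn n (2 * n + j) = j. Proof. move=> hk; nsolve. Qed.
Lemma fstn_X n j : j < 2 * n -> fstn n j. Proof. move=> hk; nsolve. Qed.
Lemma fstn_Y n j : j < 2 * n -> fstn n (2 * n + j) = false. Proof. move=> hk; nsolve. Qed.
Lemma ppn_X n j : j < 2 * n -> swn n (ppn n j) = ppn n (2 * n + j). Proof. move=> hk; nsolve. Qed.
Lemma gpn_E3 n : swn n (ppn n (4 * n + 1 + 2)) = 4 * n. Proof. nsolve. Qed.
Lemma fstn_E3 n : fstn n (4 * n + 1 + 2) = false. Proof. nsolve. Qed.
Lemma pfn_E3 n : pfn n (4 * n + 1 + 2) = false. Proof. nsolve. Qed.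

Section Mat.
Variable R : realType.
Variable n : nat.
Local Open Scope ring_scope.
Local Notation N := (ldim n).
Definition sw (i : 'I_N) : 'I_N := inord (swn n i).
Definition pp (i : 'I_N) : 'I_N := inord (ppn n i).
Definition gp i := sw (pp i).
Lemma swE i : (sw i : nat) = swn n i. Proof. by rewrite /sw inordK // swn_lt. Qed.
Lemma ppE i : (pp i : nat) = ppn n i. Proof. by rewrite /pp inordK // ppn_lt. Qed.
Lemma swK : involutive sw. Proof. by move=> i; apply: ord_inj; rewrite !swE swnK. Qed.
Lemma ppK : involutive pp. Proof. by move=> i; apply: ord_inj; rewrite !ppE ppnK. Qed.
Lemma sw_pp i : sw (pp i) = pp (sw i).
Proof. by apply: ord_inj; rewrite !(swE, ppE) swn_pp. Qed.
Lemma gpK : involutive gp.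
Proof. by move=> i; rewrite /gp sw_pp swK ppK. Qed.
Definition fst (i : 'I_N) := fstn n i.
Definition pf (i : 'I_N) := pfn n i.
Definition inV (i : 'I_N) := (i < 4 * n)%N.
Lemma fst_sw i : fst (sw i) = ~~ fst i. Proof. by rewrite /fst swE fstn_sw. Qed.
Lemma fst_pp i : fst (pp i) = fst i. Proof. by rewrite /fst ppE fstn_pp. Qed.
Lemma pf_sw i : pf (sw i) = pf i. Proof. by rewrite /pf swE pfn_sw. Qed.
Lemma pf_pp i : pf (pp i) = ~~ pf i. Proof. by rewrite /pf ppE pfn_pp. Qed.
Lemma inV_sw i : inV (sw i) = inV i. Proof. by rewrite /inV swE inVn_sw. Qed.
Lemma inV_pp i : inV (pp i) = inV i. Proof. by rewrite /inV ppE inVn_pp. Qed.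
Lemma fst_gp i : fst (gp i) = ~~ fst i. Proof. by rewrite /gp fst_sw fst_pp. Qed.
Lemma pf_gp i : pf (gp i) = ~~ pf i. Proof. by rewrite /gp pf_sw pf_pp. Qed.

Definition sg (b : bool) : R := if b then 1 else -1.
Definition spm (p : 'I_N -> 'I_N) (s : 'I_N -> R) : 'M[R]_N :=
  \matrix_(i, k) ((i == p k)%:R * s k).
Lemma spmE (u : 'rV[R]_N) p s k : (u *m spm p s) 0 k = u 0 (p k) * s k.
Proof.
rewrite mxE (bigD1 (p k)) //= mxE eqxx mul1r big1 ?addr0 // => i hi.
by rewrite mxE (negbTE hi) mul0r mulr0.
Qed.

Definition J1 := spm id (fun k => sg (fst k)).
Definition J2 := spm sw (fun _ => 1).
Definition J3 := spm sw (fun k => sg (fst k)).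
Definition Gm := spm gp (fun k => sg (fst k == pf k)).
Definition Om := spm pp (fun k => (inV k)%:R * sg (pf k)).

Lemma oppE (A : 'rV[R]_N) k : (- A) 0 k = - A 0 k. Proof. by rewrite mxE. Qed.
Ltac crd := apply/rowP => k; rewrite /act /J1 /J2 /J3 ?oppE !spmE /=.

Lemma hpc_alg :
  [/\ [/\ forall u, act J1 (act J1 u) = u,
          forall u, act J2 (act J2 u) = u &
          forall u, act J3 (act J3 u) = - u] &
      [/\ forall u, act J1 (act J2 u) = act J3 u &
          forall u, act J2 (act J1 u) = - act J3 u]].
Proof.
split; split => u; crd.
- by case: (fst k); rewrite /sg /=; ring.
- by rewrite swK mulr1 mulr1.
- rewrite swK fst_sw; case: (fst k); rewrite /sg /=; ring.
- by rewrite mulr1.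
- rewrite fst_sw; case: (fst k); rewrite /sg /=; ring.
Qed.

Section J.
Variable j : nat.
Hypothesis hj : (j < 2 * n)%N.
Lemma XiE : (Xi n j : nat) = j. Proof. rewrite /Xi inordK //; rewrite /ldim; lia. Qed.
Lemma YiE : (Yi n j : nat) = (2 * n + j)%N. Proof. rewrite /Yi inordK //; rewrite /ldim; lia. Qed.
Lemma swX : sw (Xi n j) = Yi n j. Proof. by apply: ord_inj; rewrite swE XiE YiE swn_X. Qed.
Lemma swY : sw (Yi n j) = Xi n j. Proof. by apply: ord_inj; rewrite swE XiE YiE swn_Y. Qed.
Lemma fstX : fst (Xi n j) = true. Proof. by rewrite /fst XiE fstn_X. Qed.
Lemma fstY : fst (Yi n j) = false. Proof. by rewrite /fst YiE fstn_Y. Qed.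
End J.

Definition beta (u v : vec R n) : R := \sum_(j < 2 * n)
      (u 0 (Xi n j) * v 0 (Yi n j) - u 0 (Yi n j) * v 0 (Xi n j)).
Lemma bracketE u v : bracket u v = beta u v *: delta_mx 0 (Zi n). Proof. by []. Qed.
Lemma betaZ u c v : beta u (c *: v) = c * beta u v.
Proof. rewrite /beta mulr_sumr; apply: eq_bigr => j _; by rewrite !mxE mulrBr ![u 0 _ * (c * _)]mulrCA. Qed.
Lemma betaN u v : beta u v = - beta v u.
Proof. rewrite /beta -sumrN; apply: eq_bigr => j _. ring. Qed.

Lemma beta_J1 u v : beta (u *m J1) v = - beta u (v *m J1).
Proof. move: u v; move=> u v; rewrite /beta -sumrN; apply: eq_bigr => j _;
  have hj := ltn_ord j; rewrite /J1 /J2 /J3 !spmE /= ?(swX hj) ?(swY hj) ?(fstY hj) ?(fstX hj) /sg; ring. Qed.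
Lemma beta_J2 u v : beta (u *m J2) v = - beta u (v *m J2).
Proof. move: u v; move=> u v; rewrite /beta -sumrN; apply: eq_bigr => j _;
  have hj := ltn_ord j; rewrite /J1 /J2 /J3 !spmE /= ?(swX hj) ?(swY hj) ?(fstY hj) ?(fstX hj) /sg; ring. Qed.
Lemma beta_J3 u v : beta (u *m J3) v = - beta u (v *m J3).
Proof. move: u v; move=> u v; rewrite /beta -sumrN; apply: eq_bigr => j _;
  have hj := ltn_ord j; rewrite /J1 /J2 /J3 !spmE /= ?(swX hj) ?(swY hj) ?(fstY hj) ?(fstX hj) /sg; ring. Qed.

Lemma nij0 J eps : (forall u v, beta (u *m J) v = - beta u (v *m J)) ->
  (forall u : vec R n, u *m J *m J = eps *: u) -> forall x y, nijenhuis J x y = 0.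
Proof.
move=> hb hJ x y; rewrite /nijenhuis /act !bracketE.
have -> : beta (x *m J) (y *m J) = - (eps * beta x y) by rewrite hb hJ betaZ.
rewrite hb -!scalemxAl hJ scalerA !scaleNr opprK addrK [eps * _]mulrC addNr.
by [].
Qed.

Lemma nij_all : [/\ forall x y, nijenhuis J1 x y = 0,
          forall x y, nijenhuis J2 x y = 0 &
          forall x y, nijenhuis J3 x y = 0].
Proof.
have [[h1 h2 h3] _] := hpc_alg.
split.
- apply: (nij0 (eps := 1)) => [|u]; first exact: beta_J1. by rewrite scale1r; apply: h1.
- apply: (nij0 (eps := 1)) => [|u]; first exact: beta_J2. by rewrite scale1r; apply: h2.
- apply: (nij0 (eps := -1)) => [|u]; first exact: beta_J3. by rewrite scaleN1r; apply: h3.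
Qed.

Lemma mNE m p (A : 'M[R]_(m,p)) i j : (- A) i j = - A i j. Proof. by rewrite mxE. Qed.
Lemma mDE m p (A B : 'M[R]_(m,p)) i j : (A + B) i j = A i j + B i j. Proof. by rewrite mxE. Qed.
Lemma mZE m p a (A : 'M[R]_(m,p)) i j : (a *: A) i j = a * A i j. Proof. by rewrite mxE. Qed.

Lemma formE (G : 'M[R]_N) (u v : vec R n) : Defs.form G u v = \sum_k (u *m G) 0 k * v 0 k.
Proof. by rewrite /Defs.form mxE; apply: eq_bigr => k _; rewrite [v^T _ _]mxE. Qed.
Lemma formDl (G : 'M[R]_N) (u w v : vec R n) : Defs.form G (u + w) v = Defs.form G u v + Defs.form G w v.
Proof. by rewrite /Defs.form !mulmxDl mDE. Qed.
Lemma formZl (G : 'M[R]_N) (a : R) (u v : vec R n) : Defs.form G (a *: u) v = a * Defs.form G u v.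
Proof. by rewrite /Defs.form -!scalemxAl mZE. Qed.
Lemma formNl (G : 'M[R]_N) (u v : vec R n) : Defs.form G (- u) v = - Defs.form G u v.
Proof. by rewrite /Defs.form !mulNmx mNE. Qed.

Definition cc k := sg (fst k == pf k).
Lemma formG (u v : vec R n) : Defs.form Gm u v = \sum_k u 0 (gp k) * cc k * v 0 k.
Proof. by rewrite formE; apply: eq_bigr => k _; rewrite /Gm spmE. Qed.
Lemma formC (u v : vec R n) : Defs.form Gm u v = Defs.form Gm v u.
Proof.
rewrite !formG [RHS](reindex_inj (inv_inj gpK)) /=; apply: eq_bigr => k _.
rewrite gpK /cc fst_gp pf_gp; case: (fst k); case: (pf k); rewrite /sg /=; ring.
Qed.

Lemma GG (u : vec R n) : u *m Gm *m Gm = u.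
Proof.
apply/rowP => k; rewrite /Gm !spmE gpK fst_gp pf_gp.
case: (fst k); case: (pf k); rewrite /sg /=; ring.
Qed.

Lemma metricG : metric Gm.
Proof.
split.
- apply/matrixP => i k; rewrite !mxE.
  have [->|ne] := eqVneq i (gp k).
    by rewrite gpK eqxx fst_gp pf_gp; case: (fst k); case: (pf k).
  have -> : (k == gp i) = false.
    by apply/negbTE; apply: contra ne => /eqP ->; rewrite gpK.
  by rewrite !mul0r.
- have h : Gm *m Gm = 1%:M.
    by apply/row_matrixP => i; rewrite !rowE mulmxA GG mulmx1.
  by case: (mulmx1_unit h).
Qed.

Lemma sw_gp_sw k : sw (gp (sw k)) = gp k.
Proof. by rewrite /gp swK -sw_pp. Qed.

Lemma formJ1 (x y : vec R n) : Defs.form Gm (act J1 x) (act J1 y) = - Defs.form Gm x y.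
Proof.
rewrite /act !formG -sumrN; apply: eq_bigr => k _; rewrite /J1 !spmE /= fst_gp /cc.
case: (fst k); case: (pf k); rewrite /sg /=; ring.
Qed.
Lemma formJ2 (x y : vec R n) : Defs.form Gm (act J2 x) (act J2 y) = - Defs.form Gm x y.
Proof.
rewrite /act !formG [LHS](reindex_inj (inv_inj swK)) -sumrN; apply: eq_bigr => k _.
rewrite /J2 !spmE /= swK sw_gp_sw /cc fst_sw pf_sw.
case: (fst k); case: (pf k); rewrite /sg /=; ring.
Qed.
Lemma formJ3 (x y : vec R n) : - Defs.form Gm (act J3 x) (act J3 y) = - Defs.form Gm x y.
Proof.
congr (- _).
rewrite /act !formG [LHS](reindex_inj (inv_inj swK)); apply: eq_bigr => k _.
rewrite /J3 !spmE /= swK sw_gp_sw /cc fst_gp !fst_sw pf_sw.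
case: (fst k); case: (pf k); rewrite /sg /=; ring.
Qed.

Lemma gpE3 : gp (Ei n 2) = Zi n.
Proof.
apply: ord_inj; rewrite /gp swE ppE /Ei /Zi inordK ?gpn_E3; last by rewrite /ldim; lia.
by rewrite inordK //; rewrite /ldim; lia.
Qed.
Lemma E3_props : fst (Ei n 2) = false /\ pf (Ei n 2) = false.
Proof. rewrite /fst /pf /Ei inordK ?fstn_E3 ?pfn_E3 //; rewrite /ldim; lia. Qed.

Lemma formZ (z : vec R n) : Defs.form Gm (delta_mx 0 (Zi n)) z = z 0 (Ei n 2).
Proof.
rewrite formG (bigD1 (Ei n 2)) //= big1 ?addr0.
  rewrite gpE3 mxE !eqxx /cc; case: E3_props => -> ->; rewrite /sg /=; ring.
move=> k hk; rewrite mxE eqxx /=.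
have -> : (gp k == Zi n) = false.
  apply/negbTE; apply: contra hk => /eqP h; apply/eqP.
  by rewrite -(gpK k) h -gpE3 gpK.
by rewrite !mul0r.
Qed.

Lemma inVX j : (j < 2 * n)%N -> inV (Xi n j). Proof. by move=> hj; rewrite /inV XiE //; lia. Qed.
Lemma inVY j : (j < 2 * n)%N -> inV (Yi n j). Proof. by move=> hj; rewrite /inV YiE //; lia. Qed.

Lemma le2N : (2 * n <= N)%N. Proof. rewrite /ldim; lia. Qed.
Lemma le24 : (2 * n <= 4 * n)%N. Proof. lia. Qed.
Lemma le4N : (4 * n <= N)%N. Proof. rewrite /ldim; lia. Qed.
Lemma sub42 : (4 * n - 2 * n = 2 * n)%N. Proof. lia. Qed.
Lemma OmG (u : vec R n) k : (u *m Om) 0 (gp k) = u 0 (sw k) * ((inV k)%:R * sg (~~ pf k)).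
Proof. by rewrite /Om spmE /gp sw_pp ppK inV_pp inV_sw pf_pp pf_sw. Qed.

Lemma formO (u v : vec R n) : Defs.form Gm (u *m Om) v = beta u v.
Proof.
rewrite formG.
pose F := fun k : 'I_N => u 0 (sw k) * ((inV k)%:R * sg (~~ pf k)) * cc k * v 0 k.
have -> : \sum_(k < N) (u *m Om) 0 (gp k) * cc k * v 0 k = \sum_(k < N) F (inord (k : nat)).
  by apply: eq_bigr => k _; rewrite /F inord_val OmG.
rewrite -(big_mkord xpredT (fun k => F (inord k))).
rewrite (big_cat_nat (n := 2 * n)) //=; last exact: le2N.
rewrite (big_cat_nat (n := 4 * n) (m := 2 * n)) //=; [|exact: le24|exact: le4N].
rewrite [X in _ + (_ + X)]big_nat_cond [X in _ + (_ + X)]big1 ?addr0; last first.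
  move=> k /andP[/andP[hk1 hk2] _].
  rewrite /F /inV inordK //.
  by rewrite ltnNge hk1 /= !mul0r !mulr0 !mul0r.
rewrite [X in _ + X](big_addn 0 (4 * n) (2 * n)).
rewrite sub42.
rewrite -big_split /= big_mkord /beta; apply: eq_bigr => j _.
have hj := ltn_ord j.
have eY : inord (j + 2 * n) = Yi n j :> 'I_N by rewrite /Yi [(j + _)%N]addnC.
have eX : inord j = Xi n j :> 'I_N by [].
rewrite /F eY eX.
rewrite (swX hj) (swY hj) (inVX hj) (inVY hj) /cc (fstX hj) (fstY hj).
case: (pf (Xi n j)); case: (pf (Yi n j)); rewrite /sg /=; ring.
Qed.

Definition Gam (i : 'I_N) : 'M[R]_N := if i == Ei n 2 then - Om else 0.

Lemma nablaE (x y : vec R n) : nabla Gam x y = - (x 0 (Ei n 2) *: (y *m Om)).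
Proof.
rewrite /nabla (bigD1 (Ei n 2)) //= big1 ?addr0.
  by rewrite /Gam eqxx mulmxN scalerN.
by move=> i /negbTE hi; rewrite /Gam hi mulmx0 scaler0.
Qed.

Lemma OmJ1 (u : vec R n) : u *m J1 *m Om = u *m Om *m J1.
Proof. apply/rowP => k; rewrite /J1 /Om !spmE /= fst_pp; ring. Qed.
Lemma OmJ2 (u : vec R n) : u *m J2 *m Om = u *m Om *m J2.
Proof. apply/rowP => k; rewrite /J2 /Om !spmE /= sw_pp inV_sw pf_sw; ring. Qed.
Lemma OmJ3 (u : vec R n) : u *m J3 *m Om = u *m Om *m J3.
Proof. apply/rowP => k; rewrite /J3 /Om !spmE /= fst_pp sw_pp inV_sw pf_sw; ring. Qed.

Lemma formT (x y z : vec R n) : Defs.form Gm (torsion Gam x y) z =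
  - (x 0 (Ei n 2) * beta y z) + y 0 (Ei n 2) * beta x z - beta x y * z 0 (Ei n 2).
Proof.
rewrite /torsion !nablaE bracketE !(formDl, formNl, formZl) !formO formZ; ring.
Qed.

Lemma HPKT_ex : HPKT J1 J2 J3 Gm.
Proof.
have [hA hB] := hpc_alg.
split.
- by split => //; exact: nij_all.
- split; [exact: metricG|exact: formJ1|exact: formJ2|exact: formJ3].
exists Gam; split.
- move=> x y z; rewrite !nablaE formNl formZl formO [Defs.form Gm y _]formC formNl formZl formO.
  rewrite [beta z y]betaN; ring.
- by move=> x y; rewrite /act !nablaE OmJ1 mulNmx -scalemxAl.
- by move=> x y; rewrite /act !nablaE OmJ2 mulNmx -scalemxAl.
- by move=> x y; rewrite /act !nablaE OmJ3 mulNmx -scalemxAl.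
- move=> x y z; rewrite !formT [beta y x]betaN [beta z y]betaN [beta x z]betaN; split; ring.
Qed.
End Mat.

Theorem mainTheorem7 (R : realType) (n : nat) (hn : (1 <= n)%N) :
  exists J1 J2 J3 G : 'M[R]_(ldim n), HPKT J1 J2 J3 G.
Proof. by exists (J1 R n), (J2 R n), (J3 R n), (Gm R n); exact: HPKT_ex. Qed.
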